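(* Let $X_1,X_2,Y_1,Y_2,Z_1,Z_2$ be random variables with finite state spaces such that $(X_1,Y_1,Z_1)$ is independent of $(X_2,Y_2,Z_2)$. Put $X=(X_1,X_2)$, $Y=(Y_1,Y_2)$, $Z=(Z_1,Z_2)$. Then $\widetilde{SI}(X:Y;Z)=\widetilde{SI}(X_1:Y_1;Z_1)+\widetilde{SI}(X_2:Y_2;Z_2)$, $\widetilde{CI}(X:Y;Z)=\widetilde{CI}(X_1:Y_1;Z_1)+\widetilde{CI}(X_2:Y_2;Z_2)$, $\widetilde{UI}(X:Y\setminus Z)=\widetilde{UI}(X_1:Y_1\setminus Z_1)+\widetilde{UI}(X_2:Y_2\setminus Z_2)$, $\widetilde{UI}(X:Z\setminus Y)=\widetilde{UI}(X_1:Z_1\setminus Y_1)+\widetilde{UI}(X_2:Z_2\setminus Y_2)$.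
   Context: For any triple of random variables $(X,Y,Z)$ with finite state spaces $\mathcal X,\mathcal Y,\mathcal Z$ and joint distribution $P$, let $\Delta$ be the set of all distributions on $\mathcal X\times\mathcal Y\times\mathcal Z$ and $\Delta_P=\{Q\in\Delta: Q(X=x,Y=y)=P(X=x,Y=y)\text{ and }Q(X=x,Z=z)=P(X=x,Z=z)\ \forall x,y,z\}$; a subscript $Q$ means computed w.r.t. $Q$, no subscript means w.r.t. $P$. $CoI_Q(X;Y;Z)=MI_Q(X:Y)-MI_Q(X:Y|Z)$. Define $\widetilde{UI}(X:Y\setminus Z)=\min_{Q\in\Delta_P}MI_Q(X:Y|Z)$, $\widetilde{UI}(X:Z\setminus Y)=\min_{Q\in\Delta_P}MI_Q(X:Z|Y)$, $\widetilde{SI}(X:Y;Z)=\max_{Q\in\Delta_P}CoI_Q(X;Y;Z)$, $\widetilde{CI}(X:Y;Z)=MI(X:(Y,Z))-\min_{Q\in\Delta_P}MI_Q(X:(Y,Z))$. These definitions are applied to each of the triples $(X_1,Y_1,Z_1)$, $(X_2,Y_2,Z_2)$ and $(X,Y,Z)$ with their respective joint distributions. *)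

(* Defs.v *)
From Stdlib Require Import Reals ClassicalEpsilon.
From mathcomp Require Import all_boot.
Set Implicit Arguments. Unset Strict Implicit. Unset Printing Implicit Defensive.
Local Open Scope R_scope.

Definition rsum (T : finType) (f : T -> R) : R := \big[Rplus/0]_(t : T) f t.

Definition log2 (x : R) : R := ln x / ln 2.

(* p * log2 (num/den), with the convention 0 * log(...) = 0 *)
Definition plog (p num den : R) : R :=
  if Req_EM_T p 0 then 0 else p * log2 (num / den).

Section Triple.
Variables (X Y Z : finType).

Definition isDist (Q : X -> Y -> Z -> R) : Prop :=
  (forall x y z, 0 <= Q x y z) /\ rsum (fun x => rsum (fun y => rsum (fun z => Q x y z))) = 1.

Definition margXY (Q : X -> Y -> Z -> R) x y := rsum (fun z => Q x y z).
Definition margXZ (Q : X -> Y -> Z -> R) x z := rsum (fun y => Q x y z).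
Definition margYZ (Q : X -> Y -> Z -> R) y z := rsum (fun x => Q x y z).
Definition margX (Q : X -> Y -> Z -> R) x := rsum (fun y => rsum (fun z => Q x y z)).
Definition margY (Q : X -> Y -> Z -> R) y := rsum (fun x => rsum (fun z => Q x y z)).
Definition margZ (Q : X -> Y -> Z -> R) z := rsum (fun x => rsum (fun y => Q x y z)).

Definition MI_XY (Q : X -> Y -> Z -> R) : R :=
  rsum (fun x => rsum (fun y => plog (margXY Q x y) (margXY Q x y) (margX Q x * margY Q y))).
Definition MI_XY_Z (Q : X -> Y -> Z -> R) : R :=
  rsum (fun x => rsum (fun y => rsum (fun z =>
    plog (Q x y z) (Q x y z * margZ Q z) (margXZ Q x z * margYZ Q y z)))).
Definition MI_XZ_Y (Q : X -> Y -> Z -> R) : R :=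
  rsum (fun x => rsum (fun y => rsum (fun z =>
    plog (Q x y z) (Q x y z * margY Q y) (margXY Q x y * margYZ Q y z)))).
Definition MI_X_YZ (Q : X -> Y -> Z -> R) : R :=
  rsum (fun x => rsum (fun y => rsum (fun z =>
    plog (Q x y z) (Q x y z) (margX Q x * margYZ Q y z)))).
Definition CoI (Q : X -> Y -> Z -> R) : R := MI_XY Q - MI_XY_Z Q.

Definition DeltaP (P Q : X -> Y -> Z -> R) : Prop :=
  isDist Q /\ (forall x y, margXY Q x y = margXY P x y)
           /\ (forall x z, margXZ Q x z = margXZ P x z).
End Triple.

Definition IsInf (E : R -> Prop) (m : R) : Prop :=
  (forall r, E r -> m <= r) /\ (forall b, (forall r, E r -> b <= r) -> b <= m).
Definition IsSup (E : R -> Prop) (m : R) : Prop :=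
  (forall r, E r -> r <= m) /\ (forall b, (forall r, E r -> r <= b) -> m <= b).
Definition Rinf (E : R -> Prop) : R := epsilon (inhabits 0) (IsInf E).
Definition Rsup (E : R -> Prop) : R := epsilon (inhabits 0) (IsSup E).

Section PID.
Variables (X Y Z : finType).
Implicit Type P : X -> Y -> Z -> R.
Definition UIY P : R := Rinf (fun r => exists Q, DeltaP P Q /\ r = MI_XY_Z Q).
Definition UIZ P : R := Rinf (fun r => exists Q, DeltaP P Q /\ r = MI_XZ_Y Q).
Definition SI P : R := Rsup (fun r => exists Q, DeltaP P Q /\ r = CoI Q).
Definition CI P : R := MI_X_YZ P - Rinf (fun r => exists Q, DeltaP P Q /\ r = MI_X_YZ Q).
End PID.

(* joint distribution of ((X1,X2),(Y1,Y2),(Z1,Z2)) when (X1,Y1,Z1) is independent of (X2,Y2,Z2) *)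
Definition prodDist (X1 Y1 Z1 X2 Y2 Z2 : finType)
  (P1 : X1 -> Y1 -> Z1 -> R) (P2 : X2 -> Y2 -> Z2 -> R)
  : (X1 * X2)%type -> (Y1 * Y2)%type -> (Z1 * Z2)%type -> R :=
  fun x y z => P1 x.1 y.1 z.1 * P2 x.2 y.2 z.2.

(* Main.v *)
Require Import Defs.
From Stdlib Require Import Reals.
From mathcomp Require Import all_boot.
From Stdlib Require Import Lra FunctionalExtensionality PropExtensionality ClassicalEpsilon.
From HB Require Import structures.
Local Open Scope R_scope.
Set Implicit Arguments. Unset Strict Implicit. Unset Printing Implicit Defensive.

HB.instance Definition _ := Monoid.isComLaw.Build R 0 Rplus (fun a b c => esym (Rplus_assoc a b c)) Rplus_comm Rplus_0_l.

Lemma rsum_ext (T : finType) (f g : T -> R) : (forall t, f t = g t) -> rsum f = rsum g.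
Proof. by move=> h; rewrite /rsum; apply: eq_bigr => t _. Qed.

Lemma rsum_swap (A B : finType) (f : A -> B -> R) :
  rsum (fun a => rsum (fun b => f a b)) = rsum (fun b => rsum (fun a => f a b)).
Proof. by rewrite /rsum exchange_big. Qed.

Lemma rsum_pair (A B : finType) (f : A * B -> R) :
  rsum f = rsum (fun a => rsum (fun b => f (a, b))).
Proof. rewrite /rsum pair_bigA; apply: eq_bigr => -[a b] _ //. Qed.

Lemma rsum_add (T : finType) (f g : T -> R) : rsum (fun t => f t + g t) = rsum f + rsum g.
Proof. by rewrite /rsum big_split. Qed.

Lemma rsum_scal (T : finType) c (f : T -> R) : rsum (fun t => c * f t) = c * rsum f.
Proof.
rewrite /rsum; symmetry; apply: (big_morph (Rmult c)).
- by move=> x y; rewrite Rmult_plus_distr_l.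
- by rewrite Rmult_0_r.
Qed.

Lemma rsum_scalr (T : finType) c (f : T -> R) : rsum (fun t => f t * c) = rsum f * c.
Proof. rewrite Rmult_comm -rsum_scal; apply: rsum_ext => t; ring. Qed.

Lemma rsum_opp (T : finType) (f : T -> R) : rsum (fun t => - f t) = - rsum f.
Proof. rewrite -(Rmult_1_l (rsum f)) Ropp_mult_distr_l -rsum_scal; apply: rsum_ext => t; ring. Qed.

Lemma rsum_sub (T : finType) (f g : T -> R) : rsum (fun t => f t - g t) = rsum f - rsum g.
Proof. rewrite /Rminus -rsum_opp -rsum_add; done. Qed.

Lemma rsum0 (T : finType) : rsum (fun _ : T => 0) = 0.
Proof. by rewrite /rsum big1. Qed.

Lemma rsum_le (T : finType) (f g : T -> R) : (forall t, f t <= g t) -> rsum f <= rsum g.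
Proof.
move=> h; rewrite /rsum; apply: (big_ind2 (fun a b => a <= b)) => //.
- lra.
- by move=> *; lra.
Qed.

Lemma rsum_ge0 (T : finType) (f : T -> R) : (forall t, 0 <= f t) -> 0 <= rsum f.
Proof. move=> h; rewrite -(rsum0 T); exact: rsum_le. Qed.

Lemma rsum_ge_term (T : finType) (f : T -> R) t0 : (forall t, 0 <= f t) -> f t0 <= rsum f.
Proof.
move=> h; rewrite /rsum (bigD1 t0) //=.
have : 0 <= \big[Rplus/0]_(i | i != t0) f i.
  by apply: (big_ind (fun a => 0 <= a)) => //; [lra | move=> *; lra].
lra.
Qed.

Lemma rsum_pair_prod (A B : finType) (f : A -> R) (g : B -> R) :
  rsum (fun p : A * B => f p.1 * g p.2) = rsum f * rsum g.
Proof.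
rewrite rsum_pair /= -rsum_scalr; apply: rsum_ext => a; by rewrite rsum_scal.
Qed.

Lemma ln_le_sub1 x : 0 < x -> ln x <= x - 1.
Proof. move=> hx; have := exp_ineq1_le (ln x); rewrite exp_ln //; lra. Qed.

Lemma ln_le' a b : 0 < a -> a <= b -> ln a <= ln b.
Proof.
move=> ha [hab|->]; last lra.
by apply: Rlt_le; apply: ln_increasing.
Qed.

Lemma xlnx_ge x : 0 < x -> x - 1 <= x * ln x.
Proof.
move=> hx; have h := ln_le_sub1 (Rinv_0_lt_compat _ hx).
rewrite ln_Rinv // in h.
have : x * (- ln x) <= x * (/ x - 1) by apply: Rmult_le_compat_l; lra.
rewrite Rmult_minus_distr_l Rinv_r; [lra | lra].
Qed.

Lemma le_div_r a n d : 0 < d -> a * d <= n -> a <= n / d.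
Proof.
move=> hd h; have -> : a = a * d * / d by field; lra.
apply: Rmult_le_compat_r h; apply: Rlt_le; exact: Rinv_0_lt_compat.
Qed.

Lemma ln2_pos : 0 < ln 2.
Proof. have := ln_lt_2; lra. Qed.

Lemma plog0 n d : plog 0 n d = 0.
Proof. rewrite /plog; destruct (Req_EM_T 0 0) => //=; lra. Qed.

Lemma plogE p n d : p <> 0 -> plog p n d = p * ln (n / d) / ln 2.
Proof. move=> hp; rewrite /plog /log2; destruct (Req_EM_T p 0) as [e|e]; [by case: hp | simpl; rewrite /Rdiv; ring]. Qed.

Lemma plog_ge_sq p n d : 0 <= p -> (0 < p -> 0 < n /\ 0 < d /\ p * p <= n / d) ->
  - 2 / ln 2 <= plog p n d.
Proof.
move=> hp h; have l2 := ln2_pos.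
case: (Req_EM_T p 0) => [->|hp0].
  rewrite plog0; have : 0 < 2 / ln 2 by apply: Rdiv_lt_0_compat; lra.
  rewrite /Rdiv; lra.
have pp : 0 < p by lra.
case: (h pp) => hn [hd hpp].
rewrite plogE //.
have hq : 0 < n / d by apply: Rdiv_lt_0_compat.
have h1 : ln (p * p) <= ln (n / d) by apply: ln_le'; [nra | done].
rewrite ln_mult // in h1.
have h2 := xlnx_ge pp.
have h3 : p * (ln p + ln p) <= p * ln (n / d) by apply: Rmult_le_compat_l; lra.
apply: (Rmult_le_reg_r (ln 2)) => //.
rewrite /Rdiv !Rmult_assoc Rinv_l; lra.
Qed.

Lemma Rinf_eq E m : IsInf E m -> Rinf E = m.
Proof.
move=> hm; rewrite /Rinf.
have := epsilon_spec (inhabits 0) (IsInf E) (ex_intro _ m hm).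
set e := epsilon _ _ => he.
case: he => he1 he2; case: hm => hm1 hm2.
apply: Rle_antisym; [apply: hm2 | apply: he2]; done.
Qed.

Lemma Rsup_eq E m : IsSup E m -> Rsup E = m.
Proof.
move=> hm; rewrite /Rsup.
have := epsilon_spec (inhabits 0) (IsSup E) (ex_intro _ m hm).
set e := epsilon _ _ => he.
case: he => he1 he2; case: hm => hm1 hm2.
apply: Rle_antisym; [apply: he2 | apply: hm2]; done.
Qed.

Lemma inf_exists (E : R -> Prop) : (exists r, E r) -> (exists b, forall r, E r -> b <= r) ->
  exists m, IsInf E m.
Proof.
move=> [r0 hr0] [b hb].
have hbd : bound (fun r => E (- r)).
  exists (- b) => r hr; have := hb _ hr; lra.
have hne : exists r, E (- r) by exists (- r0); rewrite Ropp_involutive.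
case: (completeness _ hbd hne) => m [hm1 hm2].
exists (- m); split.
- move=> r hr; have : - r <= m by apply: hm1; rewrite Ropp_involutive.
  lra.
- move=> c hc; have : m <= - c.
    by apply: hm2 => r hr; have := hc _ hr; lra.
  lra.
Qed.

Section Triple.
Variables (X Y Z : finType).
Implicit Types (Q : X -> Y -> Z -> R).

Definition S3 Q := rsum (fun x => rsum (fun y => rsum (fun z => Q x y z))).

Lemma S3_isDist Q : isDist Q -> S3 Q = 1.
Proof. by case. Qed.

Section Pos.
Variables (Q : X -> Y -> Z -> R) (hQ : forall x y z, 0 <= Q x y z).

Lemma mXY_ge0 x y : 0 <= margXY Q x y. Proof. exact: rsum_ge0. Qed.
Lemma mXZ_ge0 x z : 0 <= margXZ Q x z. Proof. apply: rsum_ge0 => y; exact: hQ. Qed.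
Lemma mYZ_ge0 y z : 0 <= margYZ Q y z. Proof. apply: rsum_ge0 => x; exact: hQ. Qed.
Lemma mX_ge0 x : 0 <= margX Q x. Proof. apply: rsum_ge0 => y; exact: mXY_ge0. Qed.
Lemma mY_ge0 y : 0 <= margY Q y. Proof. apply: rsum_ge0 => x; exact: mXY_ge0. Qed.
Lemma mZ_ge0 z : 0 <= margZ Q z. Proof. apply: rsum_ge0 => x; exact: mXZ_ge0. Qed.

Lemma mXY_ge x y z : Q x y z <= margXY Q x y.
Proof. rewrite /margXY; apply: (@rsum_ge_term _ (fun z => Q x y z)) => t; exact: hQ. Qed.
Lemma mXZ_ge x y z : Q x y z <= margXZ Q x z.
Proof. rewrite /margXZ; apply: (@rsum_ge_term _ (fun y => Q x y z)) => t; exact: hQ. Qed.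
Lemma mYZ_ge x y z : Q x y z <= margYZ Q y z.
Proof. rewrite /margYZ; apply: (@rsum_ge_term _ (fun x => Q x y z)) => t; exact: hQ. Qed.
Lemma mX_ge x y z : Q x y z <= margX Q x.
Proof.
apply: Rle_trans (mXY_ge x y z) _.
exact: (@rsum_ge_term _ (fun y => margXY Q x y) y (mXY_ge0 x)).
Qed.
Lemma mY_ge x y z : Q x y z <= margY Q y.
Proof.
apply: Rle_trans (mXY_ge x y z) _.
exact: (@rsum_ge_term _ (fun x => margXY Q x y) x (fun x => mXY_ge0 x y)).
Qed.
Lemma mZ_ge x y z : Q x y z <= margZ Q z.
Proof.
apply: Rle_trans (mXZ_ge x y z) _.
exact: (@rsum_ge_term _ (fun x => margXZ Q x z) x (fun x => mXZ_ge0 x z)).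
Qed.

Lemma mX_le x : margX Q x <= S3 Q.
Proof. exact: (@rsum_ge_term _ (fun x => margX Q x) x mX_ge0). Qed.
Lemma mXZ_le x z : margXZ Q x z <= S3 Q.
Proof.
apply: Rle_trans (mX_le x); apply: rsum_le => y.
apply: (@rsum_ge_term _ (fun z => Q x y z)) => t; exact: hQ.
Qed.
Lemma mXY_le x y : margXY Q x y <= S3 Q.
Proof.
apply: Rle_trans (mX_le x).
exact: (@rsum_ge_term _ (fun y => margXY Q x y) y (mXY_ge0 x)).
Qed.
Lemma mYZ_le y z : margYZ Q y z <= S3 Q.
Proof.
apply: rsum_le => x; exact: mX_ge x y z.
Qed.
Lemma Q_le x y z : Q x y z <= S3 Q.
Proof. apply: Rle_trans (mX_ge x y z) _; exact: mX_le. Qed.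
End Pos.

Lemma S3_le (f g : X -> Y -> Z -> R) : (forall x y z, f x y z <= g x y z) -> S3 f <= S3 g.
Proof. by move=> h; do 3 (apply: rsum_le => ?). Qed.

Lemma MI_XY_Z_lb Q : isDist Q -> S3 (fun _ _ _ => - 2 / ln 2) <= MI_XY_Z Q.
Proof.
move=> [hQ h1]; apply: S3_le => x y z; apply: plog_ge_sq; first exact: hQ.
move=> hq.
have a1 := mZ_ge hQ x y z. have a2 := mXZ_ge hQ x y z. have a3 := mYZ_ge hQ x y z.
have b2 := mXZ_le hQ x z. have b3 := mYZ_le hQ y z.
have e : S3 Q = 1 by []. rewrite e in b2 b3.
split; first nra. split; first nra.
apply: le_div_r; first nra.
have hm : margXZ Q x z * margYZ Q y z <= 1 * 1 by apply: Rmult_le_compat; lra.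
have h0 : 0 <= margXZ Q x z * margYZ Q y z by nra.
have : Q x y z * Q x y z * (margXZ Q x z * margYZ Q y z) <= Q x y z * Q x y z * 1.
  apply: Rmult_le_compat_l; nra.
nra.
Qed.

Lemma MI_X_YZ_lb Q : isDist Q -> S3 (fun _ _ _ => - 2 / ln 2) <= MI_X_YZ Q.
Proof.
move=> [hQ h1]; apply: S3_le => x y z; apply: plog_ge_sq; first exact: hQ.
move=> hq.
have a1 := mX_ge hQ x y z. have a3 := mYZ_ge hQ x y z.
have b2 := mX_le hQ x. have b3 := mYZ_le hQ y z. have b4 := Q_le hQ x y z.
have e : S3 Q = 1 by []. rewrite e in b2 b3 b4.
split; first nra. split; first nra.
apply: le_div_r; first nra.
have : 0 <= Q x y z * Q x y z * (1 - margX Q x * margYZ Q y z).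
  apply: Rmult_le_pos; [nra|].
  have : margX Q x * margYZ Q y z <= 1 * 1 by apply: Rmult_le_compat; lra.
  lra.
nra.
Qed.
End Triple.

Lemma S3_rsum_comm (A B C T : finType) (h : A -> B -> C -> T -> R) :
  rsum (fun a => rsum (fun b => rsum (fun c => rsum (fun t => h a b c t)))) =
  rsum (fun t => rsum (fun a => rsum (fun b => rsum (fun c => h a b c t)))).
Proof.
under rsum_ext => a do under rsum_ext => b do rewrite rsum_swap.
under rsum_ext => a do rewrite rsum_swap.
by rewrite rsum_swap.
Qed.

Lemma S3_comm (A1 B1 C1 A2 B2 C2 : finType) (g : A1 -> B1 -> C1 -> A2 -> B2 -> C2 -> R) :
  S3 (fun a1 b1 c1 => S3 (fun a2 b2 c2 => g a1 b1 c1 a2 b2 c2)) =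
  S3 (fun a2 b2 c2 => S3 (fun a1 b1 c1 => g a1 b1 c1 a2 b2 c2)).
Proof.
rewrite /S3 S3_rsum_comm; apply: rsum_ext => a2.
rewrite S3_rsum_comm; apply: rsum_ext => b2.
by rewrite S3_rsum_comm.
Qed.

Lemma S3_rot (A B C : finType) (f : A -> B -> C -> R) :
  S3 f = rsum (fun b => rsum (fun c => rsum (fun a => f a b c))).
Proof.
rewrite /S3 rsum_swap; apply: rsum_ext => b; by rewrite rsum_swap.
Qed.

Lemma S3_scal (A B C : finType) c (f : A -> B -> C -> R) :
  S3 (fun a b d => c * f a b d) = c * S3 f.
Proof.
rewrite /S3 -rsum_scal; apply: rsum_ext => a; rewrite -rsum_scal; apply: rsum_ext => b.
by rewrite -rsum_scal.
Qed.

Lemma S3_scalr (A B C : finType) c (f : A -> B -> C -> R) :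
  S3 (fun a b d => f a b d * c) = S3 f * c.
Proof. rewrite Rmult_comm -S3_scal /S3; do 3 (apply: rsum_ext => ?); ring. Qed.

Lemma S3_add (A B C : finType) (f g : A -> B -> C -> R) :
  S3 (fun a b d => f a b d + g a b d) = S3 f + S3 g.
Proof.
rewrite /S3 -rsum_add; apply: rsum_ext => a; rewrite -rsum_add; apply: rsum_ext => b.
by rewrite -rsum_add.
Qed.

Lemma S3_sub (A B C : finType) (f g : A -> B -> C -> R) :
  S3 (fun a b d => f a b d - g a b d) = S3 f - S3 g.
Proof.
rewrite /S3 -rsum_sub; apply: rsum_ext => a; rewrite -rsum_sub; apply: rsum_ext => b.
by rewrite -rsum_sub.
Qed.

Lemma S3_ext (A B C : finType) (f g : A -> B -> C -> R) :
  (forall a b c, f a b c = g a b c) -> S3 f = S3 g.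
Proof. by move=> h; rewrite /S3; do 3 (apply: rsum_ext => ?). Qed.

Section Prod.
Variables (X1 Y1 Z1 X2 Y2 Z2 : finType).
Local Notation X := (X1 * X2)%type.
Local Notation Y := (Y1 * Y2)%type.
Local Notation Z := (Z1 * Z2)%type.

Lemma S3_split (f : X -> Y -> Z -> R) :
  S3 f = S3 (fun x1 y1 z1 => S3 (fun x2 y2 z2 => f (x1, x2) (y1, y2) (z1, z2))).
Proof.
rewrite /S3 rsum_pair; apply: rsum_ext => x1.
under rsum_ext => x2 do (rewrite rsum_pair; under rsum_ext => y1 do
   under rsum_ext => y2 do rewrite rsum_pair).
rewrite rsum_swap; apply: rsum_ext => y1.
under rsum_ext => x2 do rewrite rsum_swap.
by rewrite rsum_swap.
Qed.

Definition m1 (Q : X -> Y -> Z -> R) x1 y1 z1 :=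
  rsum (fun x2 => rsum (fun y2 => rsum (fun z2 => Q (x1, x2) (y1, y2) (z1, z2)))).
Definition m2 (Q : X -> Y -> Z -> R) x2 y2 z2 :=
  rsum (fun x1 => rsum (fun y1 => rsum (fun z1 => Q (x1, x2) (y1, y2) (z1, z2)))).

Lemma m1_margXY Q x1 y1 :
  margXY (m1 Q) x1 y1 = rsum (fun x2 => rsum (fun y2 => margXY Q (x1, x2) (y1, y2))).
Proof.
rewrite /margXY /m1 rsum_swap; apply: rsum_ext => x2.
rewrite rsum_swap; apply: rsum_ext => y2.
by rewrite rsum_pair.
Qed.

Lemma m1_margXZ Q x1 z1 :
  margXZ (m1 Q) x1 z1 = rsum (fun x2 => rsum (fun z2 => margXZ Q (x1, x2) (z1, z2))).
Proof.
rewrite /margXZ /m1 rsum_swap; apply: rsum_ext => x2.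
under [RHS]rsum_ext => z2 do rewrite rsum_pair.
under rsum_ext => y1 do rewrite rsum_swap.
by rewrite rsum_swap.
Qed.

Lemma m2_margXY Q x2 y2 :
  margXY (m2 Q) x2 y2 = rsum (fun x1 => rsum (fun y1 => margXY Q (x1, x2) (y1, y2))).
Proof.
rewrite /margXY /m2 rsum_swap; apply: rsum_ext => x1.
rewrite rsum_swap; apply: rsum_ext => y1.
by rewrite rsum_pair rsum_swap.
Qed.

Lemma m2_margXZ Q x2 z2 :
  margXZ (m2 Q) x2 z2 = rsum (fun x1 => rsum (fun z1 => margXZ Q (x1, x2) (z1, z2))).
Proof.
rewrite /margXZ /m2 rsum_swap; apply: rsum_ext => x1.
under [RHS]rsum_ext => z1 do rewrite rsum_pair.
rewrite [LHS]rsum_swap; under rsum_ext => y1 do rewrite rsum_swap.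
by rewrite [LHS]rsum_swap.
Qed.

Lemma S3_m1 Q : S3 (m1 Q) = S3 Q.
Proof. by rewrite [RHS]S3_split. Qed.

Lemma S3_m2 Q : S3 (m2 Q) = S3 Q.
Proof. by rewrite [RHS]S3_split S3_comm. Qed.

End Prod.

Definition lg (p n d : R) : R := if Req_EM_T p 0 then 0 else ln (n / d) / ln 2.

Lemma plog_lg p n d : plog p n d = p * lg p n d.
Proof.
rewrite /plog /lg /log2; destruct (Req_EM_T p 0) as [e|e]; simpl; [rewrite e; ring | done].
Qed.

Lemma ln_div' a b : 0 < a -> 0 < b -> ln (a / b) = ln a - ln b.
Proof.
move=> ha hb; rewrite /Rdiv ln_mult //; last exact: Rinv_0_lt_compat.
rewrite ln_Rinv //; ring.
Qed.

Section Prod2.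
Variables (X1 Y1 Z1 X2 Y2 Z2 : finType).
Local Notation X := (X1 * X2)%type.
Local Notation Y := (Y1 * Y2)%type.
Local Notation Z := (Z1 * Z2)%type.

Lemma prod_margXY (Q1 : X1 -> Y1 -> Z1 -> R) (Q2 : X2 -> Y2 -> Z2 -> R) x y :
  margXY (prodDist Q1 Q2) x y = margXY Q1 x.1 y.1 * margXY Q2 x.2 y.2.
Proof. exact: (rsum_pair_prod (fun z1 => Q1 x.1 y.1 z1) (fun z2 => Q2 x.2 y.2 z2)). Qed.
Lemma prod_margXZ (Q1 : X1 -> Y1 -> Z1 -> R) (Q2 : X2 -> Y2 -> Z2 -> R) x z :
  margXZ (prodDist Q1 Q2) x z = margXZ Q1 x.1 z.1 * margXZ Q2 x.2 z.2.
Proof. exact: (rsum_pair_prod (fun y1 => Q1 x.1 y1 z.1) (fun y2 => Q2 x.2 y2 z.2)). Qed.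
Lemma prod_margYZ (Q1 : X1 -> Y1 -> Z1 -> R) (Q2 : X2 -> Y2 -> Z2 -> R) y z :
  margYZ (prodDist Q1 Q2) y z = margYZ Q1 y.1 z.1 * margYZ Q2 y.2 z.2.
Proof. exact: (rsum_pair_prod (fun x1 => Q1 x1 y.1 z.1) (fun x2 => Q2 x2 y.2 z.2)). Qed.

Lemma prod_S3 (Q1 : X1 -> Y1 -> Z1 -> R) (Q2 : X2 -> Y2 -> Z2 -> R) :
  S3 (prodDist Q1 Q2) = S3 Q1 * S3 Q2.
Proof.
rewrite S3_split /prodDist /=.
under S3_ext => x1 y1 z1 do rewrite S3_scal.
by rewrite S3_scalr.
Qed.

Lemma m1_prod (Q1 : X1 -> Y1 -> Z1 -> R) (Q2 : X2 -> Y2 -> Z2 -> R) :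
  S3 Q2 = 1 -> m1 (prodDist Q1 Q2) = Q1.
Proof.
move=> h; apply: functional_extensionality => x1; apply: functional_extensionality => y1;
apply: functional_extensionality => z1.
have -> : m1 (prodDist Q1 Q2) x1 y1 z1 = S3 (fun x2 y2 z2 => Q1 x1 y1 z1 * Q2 x2 y2 z2) by [].
by rewrite S3_scal h Rmult_1_r.
Qed.

Lemma m2_prod (Q1 : X1 -> Y1 -> Z1 -> R) (Q2 : X2 -> Y2 -> Z2 -> R) :
  S3 Q1 = 1 -> m2 (prodDist Q1 Q2) = Q2.
Proof.
move=> h; apply: functional_extensionality => x1; apply: functional_extensionality => y1;
apply: functional_extensionality => z1.
have -> : m2 (prodDist Q1 Q2) x1 y1 z1 = S3 (fun x2 y2 z2 => Q1 x2 y2 z2 * Q2 x1 y1 z1) by [].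
by rewrite S3_scalr h Rmult_1_l.
Qed.

Lemma isDist_prod (Q1 : X1 -> Y1 -> Z1 -> R) (Q2 : X2 -> Y2 -> Z2 -> R) :
  isDist Q1 -> isDist Q2 -> isDist (prodDist Q1 Q2).
Proof.
move=> [h1 e1] [h2 e2]; split.
- move=> x y z; rewrite /prodDist; apply: Rmult_le_pos; [exact: h1 | exact: h2].
- have := prod_S3 Q1 Q2; rewrite /S3 e1 e2 => ->; ring.
Qed.

Lemma m1_ge0 (Q : X -> Y -> Z -> R) : (forall x y z, 0 <= Q x y z) ->
  forall x1 y1 z1, 0 <= m1 Q x1 y1 z1.
Proof. by move=> h x1 y1 z1; do 3 (apply: rsum_ge0 => ?). Qed.
Lemma m2_ge0 (Q : X -> Y -> Z -> R) : (forall x y z, 0 <= Q x y z) ->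
  forall x2 y2 z2, 0 <= m2 Q x2 y2 z2.
Proof. by move=> h x1 y1 z1; do 3 (apply: rsum_ge0 => ?). Qed.

Lemma m1_ge (Q : X -> Y -> Z -> R) : (forall x y z, 0 <= Q x y z) ->
  forall x y z, Q x y z <= m1 Q x.1 y.1 z.1.
Proof.
move=> h [x1 x2] [y1 y2] [z1 z2] /=.
have := Q_le (fun a b c => h (x1, a) (y1, b) (z1, c)) x2 y2 z2; done.
Qed.
Lemma m2_ge (Q : X -> Y -> Z -> R) : (forall x y z, 0 <= Q x y z) ->
  forall x y z, Q x y z <= m2 Q x.2 y.2 z.2.
Proof.
move=> h [x1 x2] [y1 y2] [z1 z2] /=.
have := Q_le (fun a b c => h (a, x2) (b, y2) (c, z2)) x1 y1 z1; done.
Qed.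

Lemma decomp (Q : X -> Y -> Z -> R) (hQ : forall x y z, 0 <= Q x y z)
  (nF dF nD dD : X -> Y -> Z -> R) (n1 d1 : X1 -> Y1 -> Z1 -> R) (n2 d2 : X2 -> Y2 -> Z2 -> R) :
  (forall x y z, 0 < Q x y z ->
     ln (nF x y z / dF x y z) = ln (n1 x.1 y.1 z.1 / d1 x.1 y.1 z.1)
       + ln (n2 x.2 y.2 z.2 / d2 x.2 y.2 z.2) + ln (nD x y z / dD x y z)) ->
  S3 (fun x y z => plog (Q x y z) (nF x y z) (dF x y z)) =
  S3 (fun x1 y1 z1 => plog (m1 Q x1 y1 z1) (n1 x1 y1 z1) (d1 x1 y1 z1)) +
  S3 (fun x2 y2 z2 => plog (m2 Q x2 y2 z2) (n2 x2 y2 z2) (d2 x2 y2 z2)) +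
  S3 (fun x y z => plog (Q x y z) (nD x y z) (dD x y z)).
Proof.
move=> hln.
have e1 : S3 (fun x1 y1 z1 => plog (m1 Q x1 y1 z1) (n1 x1 y1 z1) (d1 x1 y1 z1)) =
  S3 (fun x y z => Q x y z * lg (m1 Q x.1 y.1 z.1) (n1 x.1 y.1 z.1) (d1 x.1 y.1 z.1)).
  rewrite [RHS]S3_split /=; apply: S3_ext => x1 y1 z1.
  by rewrite plog_lg S3_scalr.
have e2 : S3 (fun x2 y2 z2 => plog (m2 Q x2 y2 z2) (n2 x2 y2 z2) (d2 x2 y2 z2)) =
  S3 (fun x y z => Q x y z * lg (m2 Q x.2 y.2 z.2) (n2 x.2 y.2 z.2) (d2 x.2 y.2 z.2)).
  rewrite [RHS]S3_split /= S3_comm; apply: S3_ext => x2 y2 z2.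
  by rewrite plog_lg S3_scalr.
rewrite e1 e2 -!S3_add; apply: S3_ext => x y z.
destruct (Req_EM_T (Q x y z) 0) as [e|hq].
  by rewrite e !plog0; ring.
have q0 : 0 < Q x y z by have := hQ x y z; lra.
have q1 : 0 < m1 Q x.1 y.1 z.1 by have := m1_ge hQ x y z; lra.
have q2 : 0 < m2 Q x.2 y.2 z.2 by have := m2_ge hQ x y z; lra.
rewrite !plogE // /lg.
destruct (Req_EM_T (m1 Q x.1 y.1 z.1) 0) as [e|ne]; first lra.
destruct (Req_EM_T (m2 Q x.2 y.2 z.2) 0) as [e'|ne']; first lra.
simpl; rewrite (hln _ _ _ q0) /Rdiv; ring.
Qed.

End Prod2.

Lemma plog_gibbs p n d : 0 <= p -> (0 < p -> 0 < n /\ 0 < d) ->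
  (p - p * d / n) / ln 2 <= plog p n d.
Proof.
move=> hp h; have l2 := ln2_pos.
destruct (Req_EM_T p 0) as [e|e].
  rewrite e plog0 /Rdiv; lra.
have pp : 0 < p by lra.
case: (h pp) => hn hd; rewrite plogE //.
have h1 := ln_le_sub1 (Rdiv_lt_0_compat _ _ hd hn).
rewrite ln_div' // in h1.
rewrite ln_div' //.
have h2 : p * (1 - d / n) <= p * (ln n - ln d) by apply: Rmult_le_compat_l; lra.
have -> : (p - p * d / n) = p * (1 - d / n) by rewrite /Rdiv; ring.
rewrite /Rdiv; apply: Rmult_le_compat_r; first by apply: Rlt_le; apply: Rinv_0_lt_compat.
rewrite /Rdiv in h2; lra.
Qed.

Section Prod3.
Variables (X1 Y1 Z1 X2 Y2 Z2 : finType).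
Local Notation X := (X1 * X2)%type.
Local Notation Y := (Y1 * Y2)%type.
Local Notation Z := (Z1 * Z2)%type.

Definition Dq (Q : X -> Y -> Z -> R) :=
  S3 (fun x y z => plog (Q x y z)
        (Q x y z * margYZ (m1 Q) y.1 z.1 * margYZ (m2 Q) y.2 z.2)
        (margYZ Q y z * m1 Q x.1 y.1 z.1 * m2 Q x.2 y.2 z.2)).

Lemma Dq_ge0 (Q : X -> Y -> Z -> R) : (forall x y z, 0 <= Q x y z) -> S3 Q = 1 -> 0 <= Dq Q.
Proof.
move=> hQ h1.
have h1' : forall x1 y1 z1, 0 <= m1 Q x1 y1 z1 := m1_ge0 hQ.
have h2' : forall x2 y2 z2, 0 <= m2 Q x2 y2 z2 := m2_ge0 hQ.
pose c x y z := margYZ Q y z * m1 Q x.1 y.1 z.1 * m2 Q x.2 y.2 z.2 *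
   / (margYZ (m1 Q) y.1 z.1 * margYZ (m2 Q) y.2 z.2).
have hc0 : forall x y z, 0 <= c x y z.
  move=> x y z; rewrite /c; apply: Rmult_le_pos.
  - apply: Rmult_le_pos; [apply: Rmult_le_pos|]; [exact: mYZ_ge0|exact: h1'|exact: h2'].
  - have := mYZ_ge0 h1' y.1 z.1; have := mYZ_ge0 h2' y.2 z.2 => a b.
    have [t0|tp] : margYZ (m1 Q) y.1 z.1 * margYZ (m2 Q) y.2 z.2 = 0 \/
                 0 < margYZ (m1 Q) y.1 z.1 * margYZ (m2 Q) y.2 z.2 by nra.
    + by rewrite t0 Rinv_0; lra.
    + by apply: Rlt_le; apply: Rinv_0_lt_compat.
have hle : S3 (fun x y z => (Q x y z - c x y z) * / ln 2) <= Dq Q.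
  apply: S3_le => x y z.
  have q0 := hQ x y z.
  destruct (Req_EM_T (Q x y z) 0) as [e|e].
    rewrite e plog0; have := hc0 x y z; have : 0 < / ln 2 by apply: Rinv_0_lt_compat; exact: ln2_pos.
    nra.
  have qp : 0 < Q x y z by lra.
  have a1 : 0 < m1 Q x.1 y.1 z.1 by have := m1_ge hQ x y z; lra.
  have a2 : 0 < m2 Q x.2 y.2 z.2 by have := m2_ge hQ x y z; lra.
  have a3 : 0 < margYZ Q y z by have := mYZ_ge hQ x y z; lra.
  have a4 : 0 < margYZ (m1 Q) y.1 z.1 by have := mYZ_ge h1' x.1 y.1 z.1; lra.
  have a5 : 0 < margYZ (m2 Q) y.2 z.2 by have := mYZ_ge h2' x.2 y.2 z.2; lra.
  eapply Rle_trans; last first.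
    apply: plog_gibbs => // _; split; repeat apply: Rmult_lt_0_compat => //.
  have -> : c x y z = Q x y z * (margYZ Q y z * m1 Q x.1 y.1 z.1 * m2 Q x.2 y.2 z.2) /
     (Q x y z * margYZ (m1 Q) y.1 z.1 * margYZ (m2 Q) y.2 z.2).
    rewrite /c; field; repeat split; lra.
  rewrite /Rdiv; lra.
have hc : S3 c <= 1.
  rewrite S3_rot -h1 [S3 Q]S3_rot.
  apply: rsum_le => y; apply: rsum_le => z.
  have -> : rsum (fun x => c x y z) = margYZ Q y z *
      / (margYZ (m1 Q) y.1 z.1 * margYZ (m2 Q) y.2 z.2) *
      rsum (fun x : X => m1 Q x.1 y.1 z.1 * m2 Q x.2 y.2 z.2).
    rewrite -rsum_scal; apply: rsum_ext => x; rewrite /c; ring.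
  rewrite (rsum_pair_prod (fun x1 => m1 Q x1 y.1 z.1) (fun x2 => m2 Q x2 y.2 z.2)).
  change (margYZ Q y z * / (margYZ (m1 Q) y.1 z.1 * margYZ (m2 Q) y.2 z.2) *
    (margYZ (m1 Q) y.1 z.1 * margYZ (m2 Q) y.2 z.2) <= margYZ Q y z).
  have := mYZ_ge0 h1' y.1 z.1; have := mYZ_ge0 h2' y.2 z.2 => a b.
  have := mYZ_ge0 hQ y z => d0.
  have [t0|tp] : margYZ (m1 Q) y.1 z.1 * margYZ (m2 Q) y.2 z.2 = 0 \/
               0 < margYZ (m1 Q) y.1 z.1 * margYZ (m2 Q) y.2 z.2 by nra.
  + rewrite t0 Rinv_0; lra.
  + rewrite Rmult_assoc Rinv_l; lra.
move: hle; rewrite S3_scalr S3_sub h1.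
have : 0 < / ln 2 by apply: Rinv_0_lt_compat; exact: ln2_pos.
nra.
Qed.

Lemma Dq_prod (Q1 : X1 -> Y1 -> Z1 -> R) (Q2 : X2 -> Y2 -> Z2 -> R) :
  isDist Q1 -> isDist Q2 -> Dq (prodDist Q1 Q2) = 0.
Proof.
move=> [h1 e1] [h2 e2]; rewrite /Dq m1_prod // m2_prod //.
rewrite -(Rmult_0_l (S3 (fun (_ : X) (_ : Y) (_ : Z) => 0))) -S3_scal.
apply: S3_ext => x y z; rewrite prod_margYZ /prodDist.
destruct (Req_EM_T (Q1 x.1 y.1 z.1 * Q2 x.2 y.2 z.2) 0) as [e|e].
  by rewrite e plog0 Rmult_0_l.
have b1 := h1 x.1 y.1 z.1; have b2 := h2 x.2 y.2 z.2.
have a1 : 0 < Q1 x.1 y.1 z.1 by apply: Rnot_le_lt => hh; apply: e; nra.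
have a2 : 0 < Q2 x.2 y.2 z.2 by apply: Rnot_le_lt => hh; apply: e; nra.
have a4 := mYZ_ge h1 x.1 y.1 z.1; have a5 := mYZ_ge h2 x.2 y.2 z.2.
rewrite plogE //.
have -> : Q1 x.1 y.1 z.1 * Q2 x.2 y.2 z.2 * margYZ Q1 y.1 z.1 * margYZ Q2 y.2 z.2 /
  (margYZ Q1 y.1 z.1 * margYZ Q2 y.2 z.2 * Q1 x.1 y.1 z.1 * Q2 x.2 y.2 z.2) = 1.
  field; repeat split; lra.
rewrite ln_1 /Rdiv; ring.
Qed.

End Prod3.

Lemma ln22 a b c d : 0 < a -> 0 < b -> 0 < c -> 0 < d ->
  ln (a * b / (c * d)) = ln a + ln b - ln c - ln d.
Proof.
move=> ha hb hc hd; rewrite ln_div'; try by apply: Rmult_lt_0_compat.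
rewrite !ln_mult //; ring.
Qed.

Lemma ln12 a c d : 0 < a -> 0 < c -> 0 < d ->
  ln (a / (c * d)) = ln a - ln c - ln d.
Proof.
move=> ha hc hd; rewrite ln_div' //; last by apply: Rmult_lt_0_compat.
rewrite !ln_mult //; ring.
Qed.

Lemma ln33 a b c d e f : 0 < a -> 0 < b -> 0 < c -> 0 < d -> 0 < e -> 0 < f ->
  ln (a * b * c / (d * e * f)) = ln a + ln b + ln c - ln d - ln e - ln f.
Proof.
move=> ha hb hc hd he hf; rewrite ln_div'; try by repeat apply: Rmult_lt_0_compat.
rewrite !ln_mult //; try by apply: Rmult_lt_0_compat.
ring.
Qed.

Section Prod4.
Variables (X1 Y1 Z1 X2 Y2 Z2 : finType).
Local Notation X := (X1 * X2)%type.
Local Notation Y := (Y1 * Y2)%type.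
Local Notation Z := (Z1 * Z2)%type.

Definition HXY (Q : X -> Y -> Z -> R) := forall x y,
  margXY Q x y = margXY (m1 Q) x.1 y.1 * margXY (m2 Q) x.2 y.2.
Definition HXZ (Q : X -> Y -> Z -> R) := forall x z,
  margXZ Q x z = margXZ (m1 Q) x.1 z.1 * margXZ (m2 Q) x.2 z.2.

Lemma HX (Q : X -> Y -> Z -> R) : HXY Q -> forall x,
  margX Q x = margX (m1 Q) x.1 * margX (m2 Q) x.2.
Proof.
move=> h x; change (rsum (fun y => margXY Q x y) = margX (m1 Q) x.1 * margX (m2 Q) x.2).
under rsum_ext => y do rewrite h.
exact: (rsum_pair_prod (fun y1 => margXY (m1 Q) x.1 y1) (fun y2 => margXY (m2 Q) x.2 y2)).
Qed.

Lemma HZ (Q : X -> Y -> Z -> R) : HXZ Q -> forall z,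
  margZ Q z = margZ (m1 Q) z.1 * margZ (m2 Q) z.2.
Proof.
move=> h z; change (rsum (fun x => margXZ Q x z) = margZ (m1 Q) z.1 * margZ (m2 Q) z.2).
under rsum_ext => x do rewrite h.
exact: (rsum_pair_prod (fun x1 => margXZ (m1 Q) x1 z.1) (fun x2 => margXZ (m2 Q) x2 z.2)).
Qed.

Lemma MI_XY_Z_dec (Q : X -> Y -> Z -> R) : (forall x y z, 0 <= Q x y z) -> HXZ Q ->
  MI_XY_Z Q = MI_XY_Z (m1 Q) + MI_XY_Z (m2 Q) + Dq Q.
Proof.
move=> hQ hxz.
have h1 := m1_ge0 hQ; have h2 := m2_ge0 hQ.
apply: (decomp hQ (nF := fun x y z => Q x y z * margZ Q z)
  (dF := fun x y z => margXZ Q x z * margYZ Q y z)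
  (n1 := fun x y z => m1 Q x y z * margZ (m1 Q) z)
  (d1 := fun x y z => margXZ (m1 Q) x z * margYZ (m1 Q) y z)
  (n2 := fun x y z => m2 Q x y z * margZ (m2 Q) z)
  (d2 := fun x y z => margXZ (m2 Q) x z * margYZ (m2 Q) y z)
  (nD := fun x y z => Q x y z * margYZ (m1 Q) y.1 z.1 * margYZ (m2 Q) y.2 z.2)
  (dD := fun x y z => margYZ Q y z * m1 Q x.1 y.1 z.1 * m2 Q x.2 y.2 z.2)).
move=> x y z q0 /=.
have a1 : 0 < m1 Q x.1 y.1 z.1 by have := m1_ge hQ x y z; lra.
have a2 : 0 < m2 Q x.2 y.2 z.2 by have := m2_ge hQ x y z; lra.
have b1 : 0 < margZ Q z by have := mZ_ge hQ x y z; lra.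
have b2 : 0 < margXZ Q x z by have := mXZ_ge hQ x y z; lra.
have b3 : 0 < margYZ Q y z by have := mYZ_ge hQ x y z; lra.
have c1 : 0 < margZ (m1 Q) z.1 by have := mZ_ge h1 x.1 y.1 z.1; lra.
have c2 : 0 < margXZ (m1 Q) x.1 z.1 by have := mXZ_ge h1 x.1 y.1 z.1; lra.
have c3 : 0 < margYZ (m1 Q) y.1 z.1 by have := mYZ_ge h1 x.1 y.1 z.1; lra.
have d1 : 0 < margZ (m2 Q) z.2 by have := mZ_ge h2 x.2 y.2 z.2; lra.
have d2 : 0 < margXZ (m2 Q) x.2 z.2 by have := mXZ_ge h2 x.2 y.2 z.2; lra.
have d3 : 0 < margYZ (m2 Q) y.2 z.2 by have := mYZ_ge h2 x.2 y.2 z.2; lra.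
have eZ : ln (margZ Q z) = ln (margZ (m1 Q) z.1) + ln (margZ (m2 Q) z.2).
  by rewrite HZ // ln_mult.
have eXZ : ln (margXZ Q x z) = ln (margXZ (m1 Q) x.1 z.1) + ln (margXZ (m2 Q) x.2 z.2).
  by rewrite hxz ln_mult.
rewrite !ln22 //; try (by apply: Rmult_lt_0_compat).
rewrite (ln_mult (Q x y z)) // (ln_mult (margYZ Q y z)) //.
lra.
Qed.

Lemma MI_X_YZ_dec (Q : X -> Y -> Z -> R) : (forall x y z, 0 <= Q x y z) -> HXY Q ->
  MI_X_YZ Q = MI_X_YZ (m1 Q) + MI_X_YZ (m2 Q) + Dq Q.
Proof.
move=> hQ hxy.
have h1 := m1_ge0 hQ; have h2 := m2_ge0 hQ.
apply: (decomp hQ (nF := fun x y z => Q x y z)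
  (dF := fun x y z => margX Q x * margYZ Q y z)
  (n1 := fun x y z => m1 Q x y z)
  (d1 := fun x y z => margX (m1 Q) x * margYZ (m1 Q) y z)
  (n2 := fun x y z => m2 Q x y z)
  (d2 := fun x y z => margX (m2 Q) x * margYZ (m2 Q) y z)
  (nD := fun x y z => Q x y z * margYZ (m1 Q) y.1 z.1 * margYZ (m2 Q) y.2 z.2)
  (dD := fun x y z => margYZ Q y z * m1 Q x.1 y.1 z.1 * m2 Q x.2 y.2 z.2)).
move=> x y z q0 /=.
have a1 : 0 < m1 Q x.1 y.1 z.1 by have := m1_ge hQ x y z; lra.
have a2 : 0 < m2 Q x.2 y.2 z.2 by have := m2_ge hQ x y z; lra.
have b1 : 0 < margX Q x by have := mX_ge hQ x y z; lra.
have b3 : 0 < margYZ Q y z by have := mYZ_ge hQ x y z; lra.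
have c1 : 0 < margX (m1 Q) x.1 by have := mX_ge h1 x.1 y.1 z.1; lra.
have c3 : 0 < margYZ (m1 Q) y.1 z.1 by have := mYZ_ge h1 x.1 y.1 z.1; lra.
have d1 : 0 < margX (m2 Q) x.2 by have := mX_ge h2 x.2 y.2 z.2; lra.
have d3 : 0 < margYZ (m2 Q) y.2 z.2 by have := mYZ_ge h2 x.2 y.2 z.2; lra.
have eX : ln (margX Q x) = ln (margX (m1 Q) x.1) + ln (margX (m2 Q) x.2).
  by rewrite HX // ln_mult.
rewrite !ln12 //; try (by repeat apply: Rmult_lt_0_compat).
rewrite !ln_mult //; try (by repeat apply: Rmult_lt_0_compat).
lra.
Qed.

End Prod4.

Lemma inf_add (E E1 E2 : R -> Prop) :
  (exists r, E1 r) -> (exists r, E2 r) ->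
  (exists b, forall r, E1 r -> b <= r) -> (exists b, forall r, E2 r -> b <= r) ->
  (forall r, E r -> exists r1 r2, E1 r1 /\ E2 r2 /\ r1 + r2 <= r) ->
  (forall r1 r2, E1 r1 -> E2 r2 -> E (r1 + r2)) ->
  IsInf E (Rinf E1 + Rinf E2).
Proof.
move=> ne1 ne2 lb1 lb2 hdec hprod.
case: (inf_exists ne1 lb1) => m1 hm1; case: (inf_exists ne2 lb2) => m2 hm2.
rewrite (Rinf_eq hm1) (Rinf_eq hm2).
case: hm1 => hm1a hm1b; case: hm2 => hm2a hm2b.
split.
- move=> r /hdec [r1 [r2 [h1 [h2 hle]]]].
  have := hm1a _ h1; have := hm2a _ h2; lra.
- move=> b hb.
  have k1 : forall r1, E1 r1 -> b - m2 <= r1.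
    move=> r1 h1.
    have : b - r1 <= m2.
      apply: hm2b => r2 h2; have := hb _ (hprod _ _ h1 h2); lra.
    lra.
  have := hm1b _ k1; lra.
Qed.

Definition Eset (F : forall A B C : finType, (A -> B -> C -> R) -> R)
  (A B C : finType) (P : A -> B -> C -> R) : R -> Prop :=
  fun r => exists Q, DeltaP P Q /\ r = F A B C Q.

Lemma DeltaP_refl (A B C : finType) (P : A -> B -> C -> R) : isDist P -> DeltaP P P.
Proof. by move=> h; split. Qed.

Lemma Eset_ne F (A B C : finType) (P : A -> B -> C -> R) : isDist P -> exists r, Eset F P r.
Proof. move=> h; exists (F A B C P); exists P; split => //; exact: DeltaP_refl. Qed.

Section Main.
Variables (X1 Y1 Z1 X2 Y2 Z2 : finType).
Local Notation X := (X1 * X2)%type.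
Local Notation Y := (Y1 * Y2)%type.
Local Notation Z := (Z1 * Z2)%type.
Variables (P1 : X1 -> Y1 -> Z1 -> R) (P2 : X2 -> Y2 -> Z2 -> R).
Hypotheses (hP1 : isDist P1) (hP2 : isDist P2).
Local Notation P := (prodDist P1 P2).

Lemma S3_XZ (A B C : finType) (Q : A -> B -> C -> R) :
  rsum (fun a => rsum (fun c => margXZ Q a c)) = S3 Q.
Proof. rewrite /S3; apply: rsum_ext => a; by rewrite rsum_swap. Qed.

Lemma DeltaP_m1 Q : DeltaP P Q ->
  DeltaP P1 (m1 Q) /\ (forall x1 y1, margXY (m1 Q) x1 y1 = margXY P1 x1 y1)
                   /\ (forall x1 z1, margXZ (m1 Q) x1 z1 = margXZ P1 x1 z1).
Proof.
move=> [[hQ e] [hxy hxz]].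
have exy : forall x1 y1, margXY (m1 Q) x1 y1 = margXY P1 x1 y1.
  move=> x1 y1; rewrite m1_margXY.
  under rsum_ext => x2 do under rsum_ext => y2 do rewrite hxy prod_margXY /=.
  under rsum_ext => x2 do rewrite rsum_scal.
  rewrite rsum_scal.
  change (margXY P1 x1 y1 * S3 P2 = margXY P1 x1 y1).
  by rewrite S3_isDist // Rmult_1_r.
have exz : forall x1 z1, margXZ (m1 Q) x1 z1 = margXZ P1 x1 z1.
  move=> x1 z1; rewrite m1_margXZ.
  under rsum_ext => x2 do under rsum_ext => z2 do rewrite hxz prod_margXZ /=.
  under rsum_ext => x2 do rewrite rsum_scal.
  rewrite rsum_scal S3_XZ S3_isDist // Rmult_1_r //.
split; last by split.
split; last by split.
split; first exact: m1_ge0.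
change (S3 (m1 Q) = 1); by rewrite S3_m1.
Qed.

Lemma DeltaP_m2 Q : DeltaP P Q ->
  DeltaP P2 (m2 Q) /\ (forall x2 y2, margXY (m2 Q) x2 y2 = margXY P2 x2 y2)
                   /\ (forall x2 z2, margXZ (m2 Q) x2 z2 = margXZ P2 x2 z2).
Proof.
move=> [[hQ e] [hxy hxz]].
have exy : forall x2 y2, margXY (m2 Q) x2 y2 = margXY P2 x2 y2.
  move=> x2 y2; rewrite m2_margXY.
  under rsum_ext => x1 do under rsum_ext => y1 do rewrite hxy prod_margXY /=.
  under rsum_ext => x1 do rewrite rsum_scalr.
  rewrite rsum_scalr.
  change (S3 P1 * margXY P2 x2 y2 = margXY P2 x2 y2).
  by rewrite S3_isDist // Rmult_1_l.
have exz : forall x2 z2, margXZ (m2 Q) x2 z2 = margXZ P2 x2 z2.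
  move=> x2 z2; rewrite m2_margXZ.
  under rsum_ext => x1 do under rsum_ext => z1 do rewrite hxz prod_margXZ /=.
  under rsum_ext => x1 do rewrite rsum_scalr.
  rewrite rsum_scalr S3_XZ S3_isDist // Rmult_1_l //.
split; last by split.
split; last by split.
split; first exact: m2_ge0.
change (S3 (m2 Q) = 1); by rewrite S3_m2.
Qed.

Lemma DeltaP_H Q : DeltaP P Q -> HXY Q /\ HXZ Q.
Proof.
move=> h; have [_ [e1 f1]] := DeltaP_m1 h; have [_ [e2 f2]] := DeltaP_m2 h.
case: h => _ [hxy hxz]; split.
- by move=> x y; rewrite hxy prod_margXY e1 e2.
- by move=> x z; rewrite hxz prod_margXZ f1 f2.
Qed.

Lemma DeltaP_prod Q1 Q2 : DeltaP P1 Q1 -> DeltaP P2 Q2 -> DeltaP P (prodDist Q1 Q2).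
Proof.
move=> [d1 [a1 b1]] [d2 [a2 b2]]; split; first exact: isDist_prod.
split.
- by move=> x y; rewrite !prod_margXY a1 a2.
- by move=> x z; rewrite !prod_margXZ b1 b2.
Qed.

Lemma H_prod (Q1 : X1 -> Y1 -> Z1 -> R) (Q2 : X2 -> Y2 -> Z2 -> R) :
  isDist Q1 -> isDist Q2 -> HXY (prodDist Q1 Q2) /\ HXZ (prodDist Q1 Q2).
Proof.
move=> h1 h2.
rewrite /HXY /HXZ m1_prod; last exact: S3_isDist.
rewrite m2_prod; last exact: S3_isDist.
split; [exact: prod_margXY | exact: prod_margXZ].
Qed.

Section Generic.
Variable F : forall A B C : finType, (A -> B -> C -> R) -> R.
Hypothesis hlb : forall (A B C : finType) (Q : A -> B -> C -> R), isDist Q ->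
  S3 (fun (_ : A) (_ : B) (_ : C) => - 2 / ln 2) <= F Q.
Hypothesis hdec : forall Q : X -> Y -> Z -> R, (forall x y z, 0 <= Q x y z) ->
  HXY Q -> HXZ Q -> F Q = F (m1 Q) + F (m2 Q) + Dq Q.

Lemma F_prod (Q1 : X1 -> Y1 -> Z1 -> R) (Q2 : X2 -> Y2 -> Z2 -> R) :
  isDist Q1 -> isDist Q2 -> F (prodDist Q1 Q2) = F Q1 + F Q2.
Proof.
move=> h1 h2; have [hxy hxz] := H_prod h1 h2.
rewrite hdec //; last by case: (isDist_prod h1 h2).
rewrite m1_prod; last exact: S3_isDist.
rewrite m2_prod; last exact: S3_isDist.
rewrite Dq_prod //; ring.
Qed.

Lemma F_inf : IsInf (Eset F P) (Rinf (Eset F P1) + Rinf (Eset F P2)).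
Proof.
apply: inf_add.
- exact: Eset_ne.
- exact: Eset_ne.
- exists (S3 (fun (_ : X1) (_ : Y1) (_ : Z1) => - 2 / ln 2)) => r [Q [[d _] ->]]; exact: hlb.
- exists (S3 (fun (_ : X2) (_ : Y2) (_ : Z2) => - 2 / ln 2)) => r [Q [[d _] ->]]; exact: hlb.
- move=> r [Q [hQ ->]].
  have [d1 _] := DeltaP_m1 hQ; have [d2 _] := DeltaP_m2 hQ.
  have [hxy hxz] := DeltaP_H hQ.
  case: (hQ) => [[q0 q1] _].
  exists (F (m1 Q)), (F (m2 Q)); split; first by exists (m1 Q).
  split; first by exists (m2 Q).
  rewrite hdec //; have := Dq_ge0 q0 q1; lra.
- move=> r1 r2 [Q1 [h1 ->]] [Q2 [h2 ->]].
  exists (prodDist Q1 Q2); split; first exact: DeltaP_prod.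
  case: h1 => d1 _; case: h2 => d2 _.
  by rewrite F_prod.
Qed.

Lemma F_Rinf : Rinf (Eset F P) = Rinf (Eset F P1) + Rinf (Eset F P2).
Proof. exact: Rinf_eq F_inf. Qed.
End Generic.

End Main.

Definition MI2 (A B : finType) (M : A -> B -> R) :=
  rsum (fun x => rsum (fun y => plog (M x y) (M x y)
     (rsum (fun y' => M x y') * rsum (fun x' => M x' y)))).

Lemma MI_XY_MI2 (A B C : finType) (Q : A -> B -> C -> R) : MI_XY Q = MI2 (margXY Q).
Proof. reflexivity. Qed.

Lemma plog_mul a b r1 r2 c1 c2 : 0 <= a -> 0 <= b ->
  (0 < a -> 0 < r1 /\ 0 < c1) -> (0 < b -> 0 < r2 /\ 0 < c2) ->
  plog (a * b) (a * b) ((r1 * r2) * (c1 * c2)) = b * plog a a (r1 * c1) + a * plog b b (r2 * c2).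
Proof.
move=> ha hb h1 h2.
destruct (Req_EM_T a 0) as [e|e].
  by rewrite e Rmult_0_l !plog0; ring.
destruct (Req_EM_T b 0) as [e'|e'].
  by rewrite e' Rmult_0_r !plog0; ring.
have pa : 0 < a by lra. have pb : 0 < b by lra.
case: (h1 pa) => p1 q1; case: (h2 pb) => p2 q2.
rewrite !plogE //; last by apply: Rmult_integral_contrapositive.
rewrite !ln_div'; try by repeat apply: Rmult_lt_0_compat.
rewrite !ln_mult //; try by repeat apply: Rmult_lt_0_compat.
rewrite /Rdiv; ring.
Qed.

Lemma S2_split (A1 A2 B1 B2 : finType) (h : A1 * A2 -> B1 * B2 -> R) :
  rsum (fun x => rsum (fun y => h x y)) =
  rsum (fun x1 => rsum (fun y1 => rsum (fun x2 => rsum (fun y2 => h (x1, x2) (y1, y2))))).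
Proof.
rewrite rsum_pair; apply: rsum_ext => x1.
under rsum_ext => x2 do rewrite rsum_pair.
by rewrite rsum_swap.
Qed.

Lemma MI2_prod (A1 B1 A2 B2 : finType) (A : A1 -> B1 -> R) (B : A2 -> B2 -> R) :
  (forall x y, 0 <= A x y) -> (forall x y, 0 <= B x y) ->
  rsum (fun x => rsum (fun y => A x y)) = 1 -> rsum (fun x => rsum (fun y => B x y)) = 1 ->
  MI2 (fun x y => A x.1 y.1 * B x.2 y.2) = MI2 A + MI2 B.
Proof.
move=> hA hB eA eB; rewrite /MI2.
have rowA : forall x y, 0 < A x y -> 0 < rsum (fun y' => A x y').
  move=> x y h; have := @rsum_ge_term _ (fun y' => A x y') y (hA x); lra.
have colA : forall x y, 0 < A x y -> 0 < rsum (fun x' => A x' y).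
  move=> x y h; have := @rsum_ge_term _ (fun x' => A x' y) x (fun x' => hA x' y); lra.
have rowB : forall x y, 0 < B x y -> 0 < rsum (fun y' => B x y').
  move=> x y h; have := @rsum_ge_term _ (fun y' => B x y') y (hB x); lra.
have colB : forall x y, 0 < B x y -> 0 < rsum (fun x' => B x' y).
  move=> x y h; have := @rsum_ge_term _ (fun x' => B x' y) x (fun x' => hB x' y); lra.
under rsum_ext => x do under rsum_ext => y do
  rewrite (rsum_pair_prod (fun y1 => A x.1 y1) (fun y2 => B x.2 y2))
          (rsum_pair_prod (fun x1 => A x1 y.1) (fun x2 => B x2 y.2))
          (plog_mul (hA x.1 y.1) (hB x.2 y.2) (fun h => conj (rowA _ _ h) (colA _ _ h))
                    (fun h => conj (rowB _ _ h) (colB _ _ h))).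
under rsum_ext => x do rewrite rsum_add.
rewrite rsum_add !S2_split /=.
congr (_ + _).
- apply: rsum_ext => x1; apply: rsum_ext => y1.
  under rsum_ext => x2 do rewrite rsum_scalr.
  by rewrite rsum_scalr eB Rmult_1_l.
- under rsum_ext => x1 do under rsum_ext => y1 do under rsum_ext => x2 do rewrite rsum_scal.
  under rsum_ext => x1 do under rsum_ext => y1 do rewrite rsum_scal.
  under rsum_ext => x1 do rewrite rsum_scalr.
  by rewrite rsum_scalr eA Rmult_1_l.
Qed.

Lemma UIY_spec (A B C : finType) (P : A -> B -> C -> R) : isDist P ->
  IsInf (Eset (@MI_XY_Z) P) (UIY P).
Proof.
move=> hP.
have [m hm] : exists m, IsInf (Eset (@MI_XY_Z) P) m.
  apply: inf_exists; first exact: Eset_ne.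
  exists (S3 (fun (_ : A) (_ : B) (_ : C) => - 2 / ln 2)) => r [Q [[d _] ->]].
  exact: MI_XY_Z_lb.
have e : UIY P = m by exact: Rinf_eq hm.
by rewrite e.
Qed.

Lemma SI_eq (A B C : finType) (P : A -> B -> C -> R) m :
  IsInf (Eset (@MI_XY_Z) P) m -> SI P = MI_XY P - m.
Proof.
move=> [hm1 hm2]; rewrite /SI; apply: Rsup_eq.
have eMI : forall Q, DeltaP P Q -> MI_XY Q = MI_XY P.
  move=> Q [_ [hxy _]]; rewrite !MI_XY_MI2.
  have -> : margXY Q = margXY P.
    by apply: functional_extensionality => x; apply: functional_extensionality => y.
  done.
split.
- move=> r [Q [hQ ->]]; rewrite /CoI eMI //.
  have := hm1 (MI_XY_Z Q) (ex_intro _ Q (conj hQ erefl)); lra.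
- move=> b hb.
  have : MI_XY P - b <= m.
    apply: hm2 => r [Q [hQ ->]].
    have := hb (CoI Q) (ex_intro _ Q (conj hQ erefl)); rewrite /CoI eMI //; lra.
  lra.
Qed.

Definition swapYZ (A B C : finType) (Q : A -> B -> C -> R) : A -> C -> B -> R :=
  fun a c b => Q a b c.

Lemma isDist_swap (A B C : finType) (Q : A -> B -> C -> R) : isDist Q -> isDist (swapYZ Q).
Proof.
move=> [h e]; split; first by move=> a c b; exact: h.
rewrite -e; apply: rsum_ext => a; by rewrite rsum_swap.
Qed.

Lemma DeltaP_swap (A B C : finType) (P Q : A -> B -> C -> R) :
  DeltaP P Q -> DeltaP (swapYZ P) (swapYZ Q).
Proof.
move=> [d [hxy hxz]]; split; first exact: isDist_swap.
by split => a b; [exact: hxz | exact: hxy].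
Qed.

Lemma MI_swap (A B C : finType) (Q : A -> B -> C -> R) : MI_XY_Z (swapYZ Q) = MI_XZ_Y Q.
Proof. rewrite /MI_XY_Z; apply: rsum_ext => a; by rewrite rsum_swap. Qed.

Lemma UIZ_swap (A B C : finType) (P : A -> B -> C -> R) : UIZ P = UIY (swapYZ P).
Proof.
rewrite /UIZ /UIY; f_equal; apply: functional_extensionality => r.
apply: propositional_extensionality; split.
- move=> [Q [hQ ->]]; exists (swapYZ Q); split; first exact: DeltaP_swap.
  by rewrite MI_swap.
- move=> [Q [hQ ->]]; exists (swapYZ Q); split.
  + exact: (DeltaP_swap hQ).
  + by rewrite -MI_swap.
Qed.

Unset Implicit Arguments. Set Strict Implicit.

Theorem mainTheorem14 (X1 Y1 Z1 X2 Y2 Z2 : finType)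
  (P1 : X1 -> Y1 -> Z1 -> R) (P2 : X2 -> Y2 -> Z2 -> R)
  (hP1 : isDist P1) (hP2 : isDist P2) :
  let P := prodDist P1 P2 in
  SI P = SI P1 + SI P2 /\
  CI P = CI P1 + CI P2 /\
  UIY P = UIY P1 + UIY P2 /\
  UIZ P = UIZ P1 + UIZ P2.
Proof.
move=> P.
have lbY : forall (A B C : finType) (Q : A -> B -> C -> R), isDist Q ->
    S3 (fun (_ : A) (_ : B) (_ : C) => - 2 / ln 2) <= MI_XY_Z Q.
  move=> A B C Q h; exact: MI_XY_Z_lb.
have lbX : forall (A B C : finType) (Q : A -> B -> C -> R), isDist Q ->
    S3 (fun (_ : A) (_ : B) (_ : C) => - 2 / ln 2) <= MI_X_YZ Q.
  move=> A B C Q h; exact: MI_X_YZ_lb.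
have decY : forall Q : X1 * X2 -> Y1 * Y2 -> Z1 * Z2 -> R, (forall x y z, 0 <= Q x y z) ->
    HXY Q -> HXZ Q -> MI_XY_Z Q = MI_XY_Z (m1 Q) + MI_XY_Z (m2 Q) + Dq Q.
  move=> Q h _ hxz; exact: MI_XY_Z_dec.
have decX : forall Q : X1 * X2 -> Y1 * Y2 -> Z1 * Z2 -> R, (forall x y z, 0 <= Q x y z) ->
    HXY Q -> HXZ Q -> MI_X_YZ Q = MI_X_YZ (m1 Q) + MI_X_YZ (m2 Q) + Dq Q.
  move=> Q h hxy _; exact: MI_X_YZ_dec.
have UY : UIY P = UIY P1 + UIY P2.
  exact: (F_Rinf hP1 hP2 (F := @MI_XY_Z) lbY decY).
split; last split; last split.
-
  have i := F_inf hP1 hP2 (F := @MI_XY_Z) lbY decY.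
  rewrite (SI_eq i) (SI_eq (UIY_spec hP1)) (SI_eq (UIY_spec hP2)).
  change (Rinf (Eset (@MI_XY_Z) P1)) with (UIY P1).
  change (Rinf (Eset (@MI_XY_Z) P2)) with (UIY P2).
  have -> : MI_XY P = MI_XY P1 + MI_XY P2.
    rewrite !MI_XY_MI2.
    have -> : margXY P = fun x y => margXY P1 x.1 y.1 * margXY P2 x.2 y.2.
      apply: functional_extensionality => x; apply: functional_extensionality => y.
      exact: prod_margXY.
    case: hP1 => a1 b1; case: hP2 => a2 b2.
    apply: MI2_prod => //.
    + move=> x y; exact: mXY_ge0.
    + move=> x y; exact: mXY_ge0.
  ring.
-
  rewrite /CI.
  change (MI_X_YZ P - Rinf (Eset (@MI_X_YZ) P) =
    MI_X_YZ P1 - Rinf (Eset (@MI_X_YZ) P1) + (MI_X_YZ P2 - Rinf (Eset (@MI_X_YZ) P2))).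
  rewrite (F_Rinf hP1 hP2 (F := @MI_X_YZ) lbX decX).
  rewrite /P (F_prod (F := @MI_X_YZ) decX hP1 hP2).
  ring.
- exact: UY.
- rewrite !UIZ_swap.
  change (UIY (prodDist (swapYZ P1) (swapYZ P2)) = UIY (swapYZ P1) + UIY (swapYZ P2)).
  have h1 := isDist_swap hP1; have h2 := isDist_swap hP2.
  have decY' : forall Q : X1 * X2 -> Z1 * Z2 -> Y1 * Y2 -> R, (forall x y z, 0 <= Q x y z) ->
      HXY Q -> HXZ Q -> MI_XY_Z Q = MI_XY_Z (m1 Q) + MI_XY_Z (m2 Q) + Dq Q.
    move=> Q h _ hxz; exact: MI_XY_Z_dec.
  exact: (F_Rinf h1 h2 (F := @MI_XY_Z) lbY decY').
Qed.
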